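(* Let $B$ be a board with set of sinks $S$ and let $k\ge 1$. If the extended full tilt graph $\hat G_F(B^{(k)})$ of the $k$-scaled board (with sinks the sub-pixels of sinks of $S$) contains an arborescence of weight $w$ converging to its root, then the extended full tilt graph $\hat G_F(B)$ (with sinks $S$) contains an arborescence of weight at most $w$ converging to its root.
   Context: Pixels are unit squares indexed by $\mathbb{Z}^2$. A board $B=(V,E)$ is a finite subgraph of the square grid graph on $\mathbb{Z}^2$. For a pixel $p$, its row (column) segment is the maximal set of pixels reachable from $p$ using only horizontal (vertical) edges; $p^\ell,p^r$ are the leftmost/rightmost pixels of its row segment and $p^u,p^d$ the topmost/bottommost pixels of its column segment. The full tilt graph of a board has its pixels as vertices and edges $(p,p^x)$ for $x\in\{\ell,r,u,d\}$, $p^x\ne p$. The $k$-scaled board $B^{(k)}$ replaces each pixel $(i,j)\in V$ by the $k\times k$ sub-pixels $(ki+a,kj+b)$, $0\le a,b<k$, with adjacent sub-pixels of the same pixel joined by edges and adjacent sub-pixels of different pixels $p,p'$ joined iff $\{p,p'\}\in E$; its sinks are all sub-pixels of sinks of $B$. Extended graph: for a directed graph $G$ with sinks $S$, $\hat G$ has vertex set $V(G)\cup\{r\}$ with new root $r$ and edges: every edge of $G$ with weight $0$; for every edge $(p,q)$ of $G$ with $(q,p)$ not an edge of $G$, the inverse edge $(q,p)$ with weight $1$; and $(s,r)$ with weight $0$ for $s\in S$. An arborescence converging to $r$ is a spanning subgraph in which every vertex other than $r$ has exactly one outgoing edge and a directed path to $r$; its weight is the sum of its edge weights. *)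

(* Defs.v *)
From mathcomp Require Import all_boot all_order all_algebra.
Set Implicit Arguments. Unset Strict Implicit. Unset Printing Implicit Defensive.
Import Order.TTheory GRing.Theory Num.Theory.
Local Open Scope ring_scope.

(* Pixels are elements of Z^2, written (x, y): x is the horizontal
   (column) coordinate, y the vertical (row) coordinate. *)
Definition pixel := (int * int)%type.

(* Every edge of the grid graph is
   either horizontal {(x,y),(x+1,y)} or vertical {(x,y),(x,y+1)}; we record
   it by its lower-left endpoint:
     bH p  <=> {p, p + (1,0)} is an edge,
     bVe p <=> {p, p + (0,1)} is an edge. *)
Record board := Board {
  bV  : seq pixel;
  bH  : pred pixel;
  bVe : pred pixel }.

Definition right_of (p : pixel) : pixel := (p.1 + 1, p.2).
Definition up_of (p : pixel) : pixel := (p.1, p.2 + 1).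

Definition wf_board (B : board) : Prop :=
  [/\ uniq (bV B),
      (forall p, bH B p -> (p \in bV B) && (right_of p \in bV B)) &
      (forall p, bVe B p -> (p \in bV B) && (up_of p \in bV B))].

(* The row segment of p (pixels reachable from p by
   horizontal edges) is the maximal horizontal run of consecutive horizontal
   edges through p.  [left_end B p q] : q = p^l ; etc. *)
Definition left_end (B : board) (p q : pixel) : bool :=
  [&& q.2 == p.2, q.1 <= p.1,
      all (fun i : nat => bH B (q.1 + i%:Z, p.2)) (iota 0 `|p.1 - q.1|%N)
    & ~~ bH B (q.1 - 1, p.2)].

Definition right_end (B : board) (p q : pixel) : bool :=
  [&& q.2 == p.2, p.1 <= q.1,
      all (fun i : nat => bH B (p.1 + i%:Z, p.2)) (iota 0 `|q.1 - p.1|%N)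
    & ~~ bH B q].

Definition down_end (B : board) (p q : pixel) : bool :=
  [&& q.1 == p.1, q.2 <= p.2,
      all (fun i : nat => bVe B (p.1, q.2 + i%:Z)) (iota 0 `|p.2 - q.2|%N)
    & ~~ bVe B (p.1, q.2 - 1)].

Definition up_end (B : board) (p q : pixel) : bool :=
  [&& q.1 == p.1, p.2 <= q.2,
      all (fun i : nat => bVe B (p.1, p.2 + i%:Z)) (iota 0 `|q.2 - p.2|%N)
    & ~~ bVe B q].

(* Full tilt graph: directed edges (p, p^x), x in {l,r,u,d}, p^x <> p. *)
Definition tilt_edge (B : board) (p q : pixel) : bool :=
  [&& p \in bV B, q != p &
      [|| left_end B p q, right_end B p q, down_end B p q | up_end B p q]].

(* Extended graph: vertices are [Some p] for pixels p of B, and the new root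
   r = [None].  [ext0] = weight-0 edges, [ext1] = weight-1 (inverse) edges. *)
Definition ext0 (B : board) (S : pred pixel) (u v : option pixel) : bool :=
  match u, v with
  | Some p, Some q => tilt_edge B p q
  | Some s, None => (s \in bV B) && S s
  | _, _ => false
  end.

Definition ext1 (B : board) (u v : option pixel) : bool :=
  match u, v with
  | Some q, Some p => tilt_edge B p q && ~~ tilt_edge B q p
  | _, _ => false
  end.

Definition ext_edge B S u v := ext0 B S u v || ext1 B u v.

Definition ext_weight B S u v : nat := if ext0 B S u v then 0%N else 1%N.

(* An arborescence converging to r is a spanning subgraph in which every
   non-root vertex has exactly one outgoing edge: encoded by the choice
   function [f] (the out-neighbour of each pixel), each vertex having a
   directed path to r. *)
Definition parent_step (f : pixel -> option pixel) (u : option pixel) :=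
  if u is Some p then f p else None.

Definition is_arborescence (B : board) (S : pred pixel)
    (f : pixel -> option pixel) : Prop :=
  forall p, p \in bV B ->
    ext_edge B S (Some p) (f p) /\
    exists n : nat, iter n (parent_step f) (Some p) = None.

Definition arb_weight (B : board) (S : pred pixel)
    (f : pixel -> option pixel) : nat :=
  (\sum_(p <- bV B) ext_weight B S (Some p) (f p))%N.

Definition sub_pixel (k : nat) (p : pixel) (a b : nat) : pixel :=
  (k%:Z * p.1 + a%:Z, k%:Z * p.2 + b%:Z).

Definition offsets (k : nat) : seq (nat * nat) :=
  [seq (a, b) | a <- iota 0 k, b <- iota 0 k].

Definition scale_board (k : nat) (B : board) : board :=
  {| bV := [seq sub_pixel k p ab.1 ab.2 | p <- bV B, ab <- offsets k];
     bH := fun q => has (fun p => has (fun ab =>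
              (q == sub_pixel k p ab.1 ab.2) &&
              (if (ab.1.+1 < k)%N then true else bH B p)) (offsets k)) (bV B);
     bVe := fun q => has (fun p => has (fun ab =>
              (q == sub_pixel k p ab.1 ab.2) &&
              (if (ab.2.+1 < k)%N then true else bVe B p)) (offsets k)) (bV B) |}.

Definition scale_sinks (k : nat) (B : board) (S : pred pixel) : pred pixel :=
  fun q => has (fun p => S p &&
             has (fun ab => q == sub_pixel k p ab.1 ab.2) (offsets k)) (bV B).

(* Main.v *)
Require Import Defs.
From mathcomp Require Import all_boot all_order all_algebra zify.
Import Order.TTheory GRing.Theory Num.Theory.
Local Open Scope ring_scope.
Set Implicit Arguments. Unset Strict Implicit.

Lemma sub_inj1 (k : nat) (X X' : int) (a a' : nat) :
  (a < k)%N -> (a' < k)%N -> k%:Z * X + a%:Z = k%:Z * X' + a'%:Z -> X = X' /\ a = a'.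
Proof.
move=> ha ha' e.
have h1 : X <= X' by nia.
have h2 : X' <= X by nia.
have eX : X = X' by lia.
split=> //; subst X'; lia.
Qed.

Lemma all_iotaP (P : int -> bool) (a b : int) : a <= b ->
  all (fun i : nat => P (a + i%:Z)) (iota 0 `|b - a|%N) <->
  (forall z, a <= z -> z < b -> P z).
Proof.
move=> ab; split.
- move=> /allP H z h1 h2.
  have := H `|z - a|%N; rewrite mem_iota add0n.
  have -> : a + (`|z - a|%N)%:Z = z by lia.
  apply; lia.
- move=> H; apply/allP => i; rewrite mem_iota add0n => hi.
  apply: H; lia.
Qed.

Section OneD.
Variables (k : nat) (h m h' : int -> bool).
Hypothesis k0 : (0 < k)%N.
Hypothesis hwf : forall X, h X -> m X && m (X + 1).
Hypothesis Hh' : forall Z (c : nat), (c < k)%N ->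
  h' (k%:Z * Z + c%:Z) = m Z && ((c.+1 < k)%N || h Z).

Lemma left1 (P Q : int) (a a' : nat) : (a < k)%N -> (a' < k)%N ->
  k%:Z * Q + a'%:Z < k%:Z * P + a%:Z ->
  (forall z, k%:Z * Q + a'%:Z <= z -> z < k%:Z * P + a%:Z -> h' z) ->
  ~~ h' (k%:Z * Q + a'%:Z - 1) ->
  [/\ Q <= P, (forall Z, Q <= Z -> Z < P -> h Z), ~~ h (Q - 1) & m Q].
Proof.
move=> ha ha' lt H nh.
have QP : Q <= P by nia.
split=> //.
- move=> Z h1 h2.
  have : h' (k%:Z * Z + (k.-1)%:Z) by apply: H; nia.
  rewrite Hh'; last by lia.
  have -> : (k.-1.+1 < k)%N = false by lia.
  by case/andP.
- apply/negP => hq; move: nh; case: a' ha' H lt {QP} => [|a'] ha' H lt.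
  + have -> : k%:Z * Q + 0%:Z - 1 = k%:Z * (Q - 1) + (k.-1)%:Z by lia.
    rewrite Hh'; last by lia.
    by rewrite hq orbT; case/andP: (hwf hq) => -> _.
  + have -> : k%:Z * Q + a'.+1%:Z - 1 = k%:Z * Q + a'%:Z by lia.
    rewrite Hh'; last by lia.
    have : h' (k%:Z * Q + a'.+1%:Z) by apply: H; lia.
    rewrite Hh' // => /andP[-> _].
    by rewrite ha'.
- have : h' (k%:Z * Q + a'%:Z) by apply: H; lia.
  by rewrite Hh' // => /andP[].
Qed.

Lemma right1 (P Q : int) (a a' : nat) : (a < k)%N -> (a' < k)%N ->
  k%:Z * P + a%:Z < k%:Z * Q + a'%:Z -> P != Q ->
  (forall z, k%:Z * P + a%:Z <= z -> z < k%:Z * Q + a'%:Z -> h' z) ->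
  ~~ h' (k%:Z * Q + a'%:Z) ->
  [/\ P <= Q, (forall Z, P <= Z -> Z < Q -> h Z), ~~ h Q & m Q].
Proof.
move=> ha ha' lt PQ H nh.
have QP : P <= Q by nia.
have hZ : forall Z, P <= Z -> Z < Q -> h Z.
  move=> Z h1 h2.
  have : h' (k%:Z * Z + (k.-1)%:Z) by apply: H; nia.
  rewrite Hh'; last by lia.
  have -> : (k.-1.+1 < k)%N = false by lia.
  by case/andP.
have mQ : m Q.
  have : h (Q - 1) by apply: hZ; lia.
  move=> /hwf/andP[_]; by rewrite subrK.
split=> //.
apply/negP => hq; move: nh; by rewrite Hh' // mQ hq orbT.
Qed.
End OneD.

Lemma sub_inj (k : nat) (P Q : pixel) (a b c d : nat) :
  (a < k)%N -> (b < k)%N -> (c < k)%N -> (d < k)%N ->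
  sub_pixel k P a b = sub_pixel k Q c d -> [/\ P = Q, a = c & b = d].
Proof.
case: P Q => [P1 P2] [Q1 Q2] ha hb hc hd; rewrite /sub_pixel /= => -[e1 e2].
case: (sub_inj1 ha hc e1) => -> ->; case: (sub_inj1 hb hd e2) => -> ->. by [].
Qed.

Lemma mem_offsets k ab : (ab \in offsets k) = (ab.1 < k)%N && (ab.2 < k)%N.
Proof.
case: ab => a b; apply/allpairsP/andP => /=.
- by case=> [[a' b']] /= [ha hb [-> ->]]; move: ha hb; rewrite !mem_iota.
- by case=> ha hb; exists (a, b); rewrite /= !mem_iota.
Qed.

Lemma mem_scale k B u : u \in bV (scale_board k B) ->
  exists P a b, [/\ P \in bV B, (a < k)%N, (b < k)%N & u = sub_pixel k P a b].
Proof.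
case/allpairsP => -[P [a b]] /= [hP hab ->]; move: hab; rewrite mem_offsets /= => /andP[ha hb].
by exists P, a, b.
Qed.

Lemma scale_mem k B P a b : P \in bV B -> (a < k)%N -> (b < k)%N ->
  sub_pixel k P a b \in bV (scale_board k B).
Proof.
move=> hP ha hb; apply/allpairsP; exists (P, (a, b)) => /=; split=> //.
by rewrite mem_offsets /= ha hb.
Qed.

Lemma bH_scale k B X Y c d : (c < k)%N -> (d < k)%N ->
  bH (scale_board k B) (sub_pixel k (X, Y) c d) =
  ((X, Y) \in bV B) && ((c.+1 < k)%N || bH B (X, Y)).
Proof.
move=> hc hd; apply/idP/idP => /=.
- case/hasP => p pin /hasP [[a' b']] abin /andP [/eqP e cond].
  move: abin; rewrite mem_offsets /= => /andP [ha hb].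
  case: (sub_inj hc hd ha hb e) => ep ea eb; subst.
  by rewrite pin /=; move: cond; case: ifP.
- case/andP => pin cond; apply/hasP; exists (X, Y) => //; apply/hasP.
  exists (c, d); first by rewrite mem_offsets /= hc hd.
  by rewrite eqxx /=; move: cond; case: ifP.
Qed.

Lemma bVe_scale k B X Y c d : (c < k)%N -> (d < k)%N ->
  bVe (scale_board k B) (sub_pixel k (X, Y) c d) =
  ((X, Y) \in bV B) && ((d.+1 < k)%N || bVe B (X, Y)).
Proof.
move=> hc hd; apply/idP/idP => /=.
- case/hasP => p pin /hasP [[a' b']] abin /andP [/eqP e cond].
  move: abin; rewrite mem_offsets /= => /andP [ha hb].
  case: (sub_inj hc hd ha hb e) => ep ea eb; subst.
  by rewrite pin /=; move: cond; case: ifP.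
- case/andP => pin cond; apply/hasP; exists (X, Y) => //; apply/hasP.
  exists (c, d); first by rewrite mem_offsets /= hc hd.
  by rewrite eqxx /=; move: cond; case: ifP.
Qed.

Lemma decomp (k : nat) (u : pixel) : (0 < k)%N ->
  [/\ (`|(u.1 %% k%:Z)%Z|%N < k)%N, (`|(u.2 %% k%:Z)%Z|%N < k)%N &
   u = sub_pixel k ((u.1 %/ k%:Z)%Z, (u.2 %/ k%:Z)%Z) `|(u.1 %% k%:Z)%Z|%N `|(u.2 %% k%:Z)%Z|%N].
Proof.
move=> k0; have kn : k%:Z != 0 by rewrite eqz_nat -lt0n.
have kp : 0 < k%:Z by rewrite ltz_nat.
case: u => x y /=.
have m1 := modz_ge0 x kn; have m2 := modz_ge0 y kn.
have l1 := ltz_pmod x kp; have l2 := ltz_pmod y kp.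
split; try lia.
rewrite /sub_pixel /= !gez0_abs //.
by rewrite [X in (X, _)](divz_eq x k%:Z) [X in (_, X)](divz_eq y k%:Z) ![_ * k%:Z]mulrC.
Qed.

Lemma tilt_scale k B P a b Q c d : wf_board B -> (0 < k)%N ->
  (a < k)%N -> (b < k)%N -> (c < k)%N -> (d < k)%N -> P \in bV B -> P != Q ->
  tilt_edge (scale_board k B) (sub_pixel k P a b) (sub_pixel k Q c d) ->
  tilt_edge B P Q && (Q \in bV B).
Proof.
case=> _ wfH wfV k0.
case: P Q => [P1 P2] [Q1 Q2] ha hb hc hd hP PQ.
rewrite /tilt_edge => /and3P [_ nvu /or4P [] ].
- rewrite /left_end /sub_pixel /= => /and4P [/eqP e2 le hall nh].
  have [eP2 ed] := sub_inj1 hd hb e2; subst Q2 d.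
  have lt : k%:Z * Q1 + c%:Z < k%:Z * P1 + a%:Z.
    rewrite lt_neqAle le andbT; apply/eqP => e.
    by have [e1 _] := sub_inj1 hc ha e; move: PQ; rewrite e1 eqxx.
  have := (all_iotaP (fun z => bH (scale_board k B) (z, k%:Z * P2 + b%:Z)) le).1 hall.
  move=> {}hall.
  have [QP hZ nhQ mQ] := left1 (h := fun X => bH B (X, P2))
     (m := fun X => (X, P2) \in bV B)
     (h' := fun z => bH (scale_board k B) (z, k%:Z * P2 + b%:Z)) k0
     (fun X H => wfH (X, P2) H) (fun Z c' hc' => bH_scale B Z P2 hc' hb) ha hc lt hall nh.
  rewrite mQ andbT hP /= eq_sym PQ /=; apply/or4P; constructor 1.
  rewrite /left_end /= eqxx QP nhQ andbT /=.
  by apply/(all_iotaP (fun z => bH B (z, P2)) QP).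
- rewrite /right_end /sub_pixel /= => /and4P [/eqP e2 le hall nh].
  have [eP2 ed] := sub_inj1 hd hb e2; subst Q2 d.
  have PQ1 : P1 != Q1 by apply: contra PQ => /eqP ->.
  have lt : k%:Z * P1 + a%:Z < k%:Z * Q1 + c%:Z.
    rewrite lt_neqAle le andbT; apply/eqP => e.
    by have [e1 _] := sub_inj1 ha hc e; move: PQ; rewrite e1 eqxx.
  have := (all_iotaP (fun z => bH (scale_board k B) (z, k%:Z * P2 + b%:Z)) le).1 hall.
  move=> {}hall.
  have [QP hZ nhQ mQ] := right1 (h := fun X => bH B (X, P2))
     (m := fun X => (X, P2) \in bV B)
     (h' := fun z => bH (scale_board k B) (z, k%:Z * P2 + b%:Z)) k0
     (fun X H => wfH (X, P2) H) (fun Z c' hc' => bH_scale B Z P2 hc' hb) ha hc lt PQ1 hall nh.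
  rewrite mQ andbT hP /= eq_sym PQ /=; apply/or4P; constructor 2.
  rewrite /right_end /= eqxx QP nhQ andbT /=.
  by apply/(all_iotaP (fun z => bH B (z, P2)) QP).
- rewrite /down_end /sub_pixel /= => /and4P [/eqP e1 le hall nh].
  have [eP1 ec] := sub_inj1 hc ha e1; subst Q1 c.
  have lt : k%:Z * Q2 + d%:Z < k%:Z * P2 + b%:Z.
    rewrite lt_neqAle le andbT; apply/eqP => e.
    by have [e1' _] := sub_inj1 hd hb e; move: PQ; rewrite e1' eqxx.
  have := (all_iotaP (fun z => bVe (scale_board k B) (k%:Z * P1 + a%:Z, z)) le).1 hall.
  move=> {}hall.
  have [QP hZ nhQ mQ] := left1 (h := fun X => bVe B (P1, X))
     (m := fun X => (P1, X) \in bV B)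
     (h' := fun z => bVe (scale_board k B) (k%:Z * P1 + a%:Z, z)) k0
     (fun X H => wfV (P1, X) H) (fun Z c' hc' => bVe_scale B P1 Z ha hc') hb hd lt hall nh.
  rewrite mQ andbT hP /= eq_sym PQ /=; apply/or4P; constructor 3.
  rewrite /down_end /= eqxx QP nhQ andbT /=.
  by apply/(all_iotaP (fun z => bVe B (P1, z)) QP).
- rewrite /up_end /sub_pixel /= => /and4P [/eqP e1 le hall nh].
  have [eP1 ec] := sub_inj1 hc ha e1; subst Q1 c.
  have PQ1 : P2 != Q2 by apply: contra PQ => /eqP ->.
  have lt : k%:Z * P2 + b%:Z < k%:Z * Q2 + d%:Z.
    rewrite lt_neqAle le andbT; apply/eqP => e.
    by have [e1' _] := sub_inj1 hb hd e; move: PQ; rewrite e1' eqxx.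
  have := (all_iotaP (fun z => bVe (scale_board k B) (k%:Z * P1 + a%:Z, z)) le).1 hall.
  move=> {}hall.
  have [QP hZ nhQ mQ] := right1 (h := fun X => bVe B (P1, X))
     (m := fun X => (P1, X) \in bV B)
     (h' := fun z => bVe (scale_board k B) (k%:Z * P1 + a%:Z, z)) k0
     (fun X H => wfV (P1, X) H) (fun Z c' hc' => bVe_scale B P1 Z ha hc') hb hd lt PQ1 hall nh.
  rewrite mQ andbT hP /= eq_sym PQ /=; apply/or4P; constructor 4.
  rewrite /up_end /= eqxx QP nhQ andbT /=.
  by apply/(all_iotaP (fun z => bVe B (P1, z)) QP).
Qed.

Lemma leq_sum_mem (T : eqType) (s : seq T) (F : T -> nat) x :
  x \in s -> (F x <= \sum_(y <- s) F y)%N.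
Proof. by move=> xs; rewrite (big_rem x) //= leq_addr. Qed.

Lemma ext_weight_le1 B S u v : (ext_weight B S u v <= 1)%N.
Proof. by rewrite /ext_weight; case: ifP. Qed.

Theorem mainTheorem9 (B : board) (S : pred pixel) (k w : nat) :
  wf_board B ->
  (forall s, S s -> s \in bV B) ->
  (1 <= k)%N ->
  (exists f, is_arborescence (scale_board k B) (scale_sinks k B S) f /\
             arb_weight (scale_board k B) (scale_sinks k B S) f = w) ->
  exists g, is_arborescence B S g /\ (arb_weight B S g <= w)%N.
Proof.
move=> wf Sin k0 [f [arb <-]].
set B' := scale_board k B; set S' := scale_sinks k B S.
pose step := parent_step f.
pose Pp p n := has (fun ab => iter n step (Some (sub_pixel k p ab.1 ab.2)) == None)
  (offsets k) || (p \notin bV B).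
have o00 : (0, 0)%N \in offsets k by rewrite mem_offsets /= k0.
have Dex : forall p, exists n, Pp p n.
  move=> p; case pin: (p \in bV B); last by exists 0%N; rewrite /Pp pin orbT.
  have [_ [n hn]] := arb _ (scale_mem pin k0 k0).
  by exists n; rewrite /Pp; apply/orP; left; apply/hasP; exists (0, 0)%N => //; apply/eqP.
pose D p := ex_minn (Dex p).
pose fab p := find (fun ab => iter (D p) step (Some (sub_pixel k p ab.1 ab.2)) == None) (offsets k).
pose ab p := nth (0, 0)%N (offsets k) (fab p).
pose sp p := sub_pixel k p (ab p).1 (ab p).2.
pose g p := if f (sp p) is Some t then Some ((t.1 %/ k%:Z)%Z, (t.2 %/ k%:Z)%Z) else None.
have F1 : forall p, p \in bV B ->
   ab p \in offsets k /\ iter (D p) step (Some (sp p)) = None.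
  move=> p pin.
  have : Pp p (D p) by rewrite /D; case: ex_minnP.
  rewrite /Pp pin orbF => hn.
  have hs : (fab p < size (offsets k))%N by rewrite /fab -has_find.
  split; first by rewrite /ab mem_nth.
  by apply/eqP; move: (nth_find (0, 0)%N hn).
have F2 : forall p n c d, (c < k)%N -> (d < k)%N ->
    iter n step (Some (sub_pixel k p c d)) = None -> (D p <= n)%N.
  move=> p n c d hc hd e; rewrite /D; case: ex_minnP => m _; apply.
  rewrite /Pp; apply/orP; left; apply/hasP; exists (c, d).
    by rewrite mem_offsets /= hc hd.
  by apply/eqP.
have F3 : forall p, p \in bV B -> sp p \in bV B'.
  move=> p pin; have [] := F1 p pin; rewrite mem_offsets => /andP [h1 h2] _.
  exact: scale_mem.
have key : forall p, p \in bV B ->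
  [/\ ext_edge B S (Some p) (g p),
      (ext_weight B S (Some p) (g p) <= ext_weight B' S' (Some (sp p)) (f (sp p)))%N &
      forall q, g p = Some q -> q \in bV B /\ (D q < D p)%N].
  move=> p pin.
  have [abin hD] := F1 p pin.
  have [e _] := arb _ (F3 p pin).
  move: abin; rewrite mem_offsets => /andP [ha hb].
  have [n eD] : exists n, D p = n.+1.
    by move: hD; case: (D p) => [|n] //; exists n.
  move: hD; rewrite eD iterSr /= /g.
  case Hf: (f (sp p)) e => [t|] e hD.
  - have [hc hd et] := decomp t k0.
    set q := ((t.1 %/ k%:Z)%Z, (t.2 %/ k%:Z)%Z) in et *.
    have Dq : (D q <= n)%N by apply: (F2 q n _ _ hc hd); rewrite -et.
    have qp : p != q.
      by apply/eqP => epq; move: Dq; rewrite -epq eD ltnn.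
    move: e; rewrite /ext_edge /ext_weight /= => /orP [] e.
    + rewrite {1}et in e.
      have /andP [tq qin] := tilt_scale wf k0 ha hb hc hd pin qp e.
      by rewrite /ext_edge /ext_weight /= tq /=; split=> // q' [<-]; split=> //; rewrite eD.
    + case/andP: e => e1 ne.
      have tin : t \in bV B' by case/and3P: e1.
      have [P' [a' [b' [P'in ha' hb' et']]]] := mem_scale tin.
      have [eP _ _] := sub_inj hc hd ha' hb' (etrans (esym et) et').
      have qin : q \in bV B by rewrite eP.
      have qp' : q != p by rewrite eq_sym.
      rewrite {1}et in e1.
      have /andP [tq _] := tilt_scale wf k0 hc hd ha hb qin qp' e1.
      split.
      * by rewrite /ext_edge /= tq /=; case: (tilt_edge B p q).
      * by rewrite (negbTE ne); case: ifP.
      * by move=> q' [<-]; split=> //; rewrite eD.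
  - move: e; rewrite /ext_edge /ext_weight /= orbF => /andP [_ /hasP [p' p'in /andP [Sp' /hasP [[c d] cdin /eqP es]]]].
    move: cdin; rewrite mem_offsets /= => /andP [hc hd].
    have [ep _ _] := sub_inj ha hb hc hd es.
    by rewrite /ext_edge /ext_weight /= pin ep Sp'.
have acyc : forall n p, (D p <= n)%N -> p \in bV B ->
    exists m, iter m (parent_step g) (Some p) = None.
  elim=> [|n IH] p Dp pin; have [_ _ hq] := key p pin.
  - exists 1%N => /=; case E: (g p) => [q|] //.
    by have [_] := hq q E; rewrite ltnNge (leq_trans Dp (leq0n _)).
  - case E: (g p) => [q|]; last by exists 1%N => /=; rewrite E.
    have [qin Dq] := hq q E.
    have [m hm] := IH q (leq_trans (leq_trans Dq Dp) (leqnn _)) qin.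
    by exists m.+1; rewrite iterSr /= E.
exists g; split.
  move=> p pin; have [e _ _] := key p pin; split=> //.
  exact: (acyc _ p (leqnn _) pin).
rewrite /arb_weight.
apply: (@leq_trans (\sum_(p <- bV B) ext_weight B' S' (Some (sp p)) (f (sp p)))).
  rewrite big_seq [X in (_ <= X)%N]big_seq; apply: leq_sum => p pin.
  by have [_ h _] := key p pin.
rewrite /= big_allpairs_dep big_seq [X in (_ <= X)%N]big_seq; apply: leq_sum => p pin.
have [abin _] := F1 p pin.
exact: (leq_sum_mem (fun ab => ext_weight B' S' (Some (sub_pixel k p ab.1 ab.2)) (f (sub_pixel k p ab.1 ab.2))) abin).
Qed.
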